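(* Let $p,q$ be integers with $1+|p|<|q|$ and $\gcd(p,q)=1$, and assume $t(x)=x^2+px-q$ is irreducible in $\mathbb{Z}[x]$. Then every nonzero endomorphism $\phi$ of $\mathbb{Z}^2$ with nontrivial kernel is not FA-recognizable with respect to $\psi_{p,q}$, i.e. the relation $\{(u,v)\in\mathrm{Dom}_{p,q}^2:\psi_{p,q}(v)=\phi(\psi_{p,q}(u))\}$ is not FA-recognizable.
   Context: For $f,g\in\mathbb{Z}[x]$ write $f\sim g$ if $t$ divides $f-g$; identify $\mathbb{Z}^2$ with the additive group of $\mathbb{Z}[x]/\langle t\rangle$ via $(h_1,h_2)\mapsto[h_1x+h_2]_\sim$. Let $\Sigma_q=\{-(|q|-1),\dots,|q|-1\}$ with the order $-(|q|-1)<\dots<|q|-1$; a string $a_0a_1\dots a_n\in\Sigma_q^*$ represents the polynomial $a_nx^n+\dots+a_1x+a_0$, and two strings are equivalent if their polynomials are $\sim$-equivalent. $\mathrm{Dom}_{p,q}$ is the set of $w\in\Sigma_q^*$ such that no string strictly smaller than $w$ in the length-lexicographic order on $\Sigma_q^*$ is equivalent to $w$, and $\psi_{p,q}:\mathrm{Dom}_{p,q}\to\mathbb{Z}^2$ sends $w$ to the $\sim$-class of the polynomial it represents. Convolution of strings pads shorter strings with a new symbol $\diamond$ and stacks them letterwise; a relation on strings is FA-recognizable if the set of convolutions of its tuples is accepted by a finite automaton. *)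

(* Defs.v *)
From HB Require Import structures.
From mathcomp Require Import all_boot all_order all_algebra.
Set Implicit Arguments. Unset Strict Implicit. Unset Printing Implicit Defensive.
Import Order.TTheory GRing.Theory Num.Theory.
Local Open Scope ring_scope.

Definition tpoly (p q : int) : {poly int} := 'X^2 + p%:P * 'X - q%:P.

Definition irreducible_Zx (f : {poly int}) : Prop :=
  f \isn't a GRing.unit /\
  forall a b : {poly int}, f = a * b -> a \is a GRing.unit \/ b \is a GRing.unit.

Definition sim (p q : int) (f g : {poly int}) : Prop :=
  exists r : {poly int}, f - g = r * tpoly p q.

Definition is_digit (q : int) (a : int) : bool := `|a| < `|q|.
Definition is_string (q : int) (w : seq int) : bool := all (is_digit q) w.

(* the string a_0 a_1 ... a_n represents a_n x^n + ... + a_1 x + a_0 *)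
Definition str_poly (w : seq int) : {poly int} := Poly w.

Definition str_equiv (p q : int) (u v : seq int) : Prop :=
  sim p q (str_poly u) (str_poly v).

Fixpoint lex_lt (u v : seq int) : bool :=
  match u, v with
  | a :: u', b :: v' => (a < b) || ((a == b) && lex_lt u' v')
  | _, _ => false
  end.

Definition llex_lt (u v : seq int) : bool :=
  (size u < size v)%N || ((size u == size v) && lex_lt u v).

Definition Dom (p q : int) (w : seq int) : Prop :=
  is_string q w /\
  forall u : seq int, is_string q u -> llex_lt u w -> ~ str_equiv p q u w.

(* psi_{p,q}(w) = h, where Z^2 is identified with Z[x]/<t> via
   (h1,h2) |-> [h1 x + h2] *)
Definition psi_is (p q : int) (w : seq int) (h : int * int) : Prop :=
  sim p q (str_poly w) (h.1%:P * 'X + h.2%:P).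

Definition is_endo (f : int * int -> int * int) : Prop :=
  forall a b : int * int,
    f (a.1 + b.1, a.2 + b.2) = ((f a).1 + (f b).1, (f a).2 + (f b).2).

Definition pad_nth (w : seq int) (i : nat) : option int :=
  if (i < size w)%N then Some (nth 0 w i) else None.
Definition conv (u v : seq int) : seq (option int * option int) :=
  mkseq (fun i => (pad_nth u i, pad_nth v i)) (maxn (size u) (size v)).

Definition dfa_accepts (A : Type) (S : finType) (s0 : S) (delta : S -> A -> S)
  (F : pred S) (w : seq A) : bool := F (foldl delta s0 w).

Definition FA_recognizable (A : Type) (L : seq A -> Prop) : Prop :=
  exists (S : finType) (s0 : S) (delta : S -> A -> S) (F : pred S),
    forall w, dfa_accepts s0 delta F w <-> L w.

Definition FA_recognizable_rel (R : seq int -> seq int -> Prop) : Prop :=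
  FA_recognizable (fun w => exists u v, w = conv u v /\ R u v).

Definition phi_rel (p q : int) (f : int * int -> int * int) (u v : seq int) : Prop :=
  Dom p q u /\ Dom p q v /\ exists h, psi_is p q u h /\ psi_is p q v (f h).

(* Main.v *)
Require Import Defs.
From HB Require Import structures.
From mathcomp Require Import all_boot all_order all_algebra.
From mathcomp Require Import zify ring lra.
From Stdlib Require Import Classical.
Import Order.TTheory GRing.Theory Num.Theory.
Local Open Scope ring_scope.


Fixpoint ev (p q : int) (w : seq int) : int * int :=
  match w with
  | [::] => (0, 0)
  | d :: w' => ((ev p q w').2 - p * (ev p q w').1, d + q * (ev p q w').1)
  end.

Lemma tpolyE (p q : int) : tpoly p q = ('X - (-p)%:P) * 'X + (-q)%:P.
Proof. rewrite /tpoly !rmorphN /=. ring. Qed.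

Lemma size_tpoly (p q : int) : size (tpoly p q) = 3%N.
Proof.
rewrite tpolyE size_MXaddC.
have -> : ('X - (- p)%:P == 0) = false.
  by apply/negbTE; rewrite -size_poly_eq0 size_XsubC.
by rewrite /= size_XsubC.
Qed.

Lemma lin_mult0 (p q c1 c0 : int) (r : {poly int}) :
  c1%:P * 'X + c0%:P = r * tpoly p q -> c1 = 0 /\ c0 = 0.
Proof.
move=> E.
have r0 : r = 0.
  apply/eqP; apply/negPn/negP => rn0.
  have tn0 : tpoly p q != 0 by rewrite -size_poly_eq0 size_tpoly.
  have := size_mul rn0 tn0; rewrite -E size_tpoly size_MXaddC.
  have : size r != 0%N by rewrite size_poly_eq0.
  case: ifP => _ /=; first lia.
  rewrite size_polyC; move=> h1 h2; rewrite !addnS /= in h2; move: h1 h2; case: (size r) => // n _; rewrite addn0; case: (c1 != 0) => //=.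
move: E; rewrite r0 mul0r => /eqP; rewrite -size_poly_eq0 size_MXaddC.
case: ifP => // /andP [/eqP h1 /eqP h2] _; split => //.
by move/polyC_inj: h1.
Qed.

Lemma sim_val (p q : int) (w : seq int) :
  sim p q (Poly w) ((ev p q w).1%:P * 'X + (ev p q w).2%:P).
Proof.
elim: w => [|d w [r IH]] /=.
  by exists 0; rewrite !mul0r !addr0 subrr.
exists ((ev p q w).1%:P + r * 'X).
rewrite cons_poly_def.
have -> : Poly w = r * tpoly p q + ((ev p q w).1%:P * 'X + (ev p q w).2%:P).
  by rewrite -IH; ring.
rewrite /tpoly !rmorphD !rmorphN !rmorphM /=. ring.
Qed.

Lemma psi_is_val (p q : int) (w : seq int) (h : int * int) :
  psi_is p q w h <-> h = ev p q w.
Proof.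
split.
  move=> [r Hr]; rewrite /str_poly in Hr; have [r' Hr'] := sim_val p q w.
  have := @lin_mult0 p q ((ev p q w).1 - h.1) ((ev p q w).2 - h.2) (r - r').
  move=> H.
  have [h1 h2] : (ev p q w).1 - h.1 = 0 /\ (ev p q w).2 - h.2 = 0.
    by apply: H; rewrite mulrBl -Hr -Hr' !rmorphB /=; ring.
  case: h {Hr H} h1 h2 => a b /= h1 h2.
  case: (ev p q w) h1 h2 => c d /= h1 h2; congr (_, _); lia.
by move=> ->; apply: sim_val.
Qed.

Lemma equiv_val (p q : int) (u v : seq int) :
  ev p q u = ev p q v -> str_equiv p q u v.
Proof.
move=> E; have [r Hr] := sim_val p q u; have [r' Hr'] := sim_val p q v.
exists (r - r'); rewrite mulrBl -Hr -Hr' E /str_poly; ring.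
Qed.

Set Implicit Arguments. Unset Strict Implicit.


Lemma lex_total (u v : seq int) : size u = size v -> u <> v ->
  lex_lt u v \/ lex_lt v u.
Proof.
elim: u v => [|a u IH] [|b v] //= [E] ne.
have [ab|ab|ab] := ltgtP a b.
- by left.
- by right.
- subst b; have ne' : u <> v by move=> e; apply: ne; rewrite e.
  by case: (IH v E ne') => h; [left|right]; rewrite h.
Qed.

Lemma llex_total (u v : seq int) : u <> v -> llex_lt u v \/ llex_lt v u.
Proof.
move=> ne; rewrite /llex_lt.
have [h|h|h] := ltngtP (size u) (size v).
- by left.
- by right.
- by case: (lex_total h ne) => H; [left|right]; rewrite H andbT; apply/eqP; lia.
Qed.

Lemma Dom_uniq (p q : int) (u v : seq int) : Dom p q u -> Dom p q v ->
  str_equiv p q u v -> u = v.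
Proof.
move=> [su Du] [sv Dv] E.
apply/eqP; apply/negPn/negP => /eqP ne.
case: (llex_total ne) => H.
- by apply: (Dv u su H).
- apply: (Du v sv H).
  case: E => r Hr; exists (- r); rewrite mulNr -Hr; ring.
Qed.

Lemma Dom_nil (p q : int) : Dom p q [::].
Proof. by split => // u _; rewrite /llex_lt; case: u. Qed.

Definition dg (q : int) (a : int) : nat := absz (a + (`|q| - 1)).
Definition BB (q : int) : nat := (2 * absz q - 1)%N.

Fixpoint idx (q : int) (w : seq int) : nat :=
  match w with
  | [::] => 0%N
  | a :: w' => (dg q a * BB q ^ size w' + idx q w')%N
  end.

Lemma idx_lt (q : int) (w : seq int) : is_string q w -> (idx q w < BB q ^ size w)%N.
Proof.
elim: w => [|a w IH] /=; first by rewrite expn0.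
move=> /andP [ha hw]; have := IH hw.
have hd : (dg q a < BB q)%N by move: ha; rewrite /is_digit /dg /BB; lia.
rewrite expnS => h.
set X := (BB q ^ size w)%N in h *; nia.
Qed.

Lemma lex_idx (q : int) (u v : seq int) : is_string q u -> is_string q v ->
  size u = size v -> lex_lt u v -> (idx q u < idx q v)%N.
Proof.
elim: u v => [|a u IH] [|b v] //= /andP [ha hu] /andP [hb hv] [E] /orP [h|/andP [/eqP ab h]].
- have hd : (dg q a < dg q b)%N by move: ha hb h; rewrite /is_digit /dg; lia.
  have := idx_lt hu; rewrite E => hlt.
  set X := (BB q ^ size v)%N in hlt *; nia.
- by subst b; rewrite E ltn_add2l; apply: IH.
Qed.

Definition rank (q : int) (w : seq int) : nat := (BB q ^ size w + idx q w)%N.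

Lemma llex_rank (q : int) (u v : seq int) : (1 < `|q|) -> is_string q u -> is_string q v ->
  llex_lt u v -> (rank q u < rank q v)%N.
Proof.
move=> hq su sv /orP [h|/andP [/eqP E h]].
- have hb : (2 <= BB q)%N by rewrite /BB; lia.
  have := idx_lt su; rewrite /rank => h1.
  apply: (@leq_trans (BB q ^ size v)%N); last exact: leq_addr.
  apply: (@leq_trans (BB q ^ (size u).+1)%N); last by rewrite leq_pexp2l //; lia.
  rewrite expnS; apply: (@leq_trans (2 * BB q ^ size u)%N); last by rewrite leq_mul2r hb orbT.
  lia.
- by rewrite /rank E ltn_add2l; apply: lex_idx.
Qed.

Lemma equiv_trans (p q : int) (u v w : seq int) :
  str_equiv p q u v -> str_equiv p q v w -> str_equiv p q u w.
Proof. move=> [r1 H1] [r2 H2]; exists (r1 + r2); rewrite mulrDl -H1 -H2; ring. Qed.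

Lemma Dom_exists (p q : int) (w : seq int) : (1 < `|q|) -> is_string q w ->
  exists u, Dom p q u /\ str_equiv p q u w.
Proof.
move=> hq.
have [n] := ubnP (rank q w); elim: n w => [|n IH] w // hn sw.
case: (classic (exists u, [/\ is_string q u, llex_lt u w & str_equiv p q u w])).
  move=> [u [su lu eu]].
  have hu : (rank q u < n)%N.
    by have := llex_rank hq su sw lu; lia.
  have [u' [Du' eu']] := IH u hu su.
  by exists u'; split => //; apply: equiv_trans eu' eu.
move=> nex; exists w; split.
  split => // u su lu eu; apply: nex; by exists u.
by exists 0; rewrite subrr mul0r.
Qed.


Lemma divq_pos (q c0 : int) : q != 0 -> 0 <= c0 ->
  exists c d, [/\ c0 = q * c + d, `|d| < `|q| & `|c| * `|q| <= c0].
Proof.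
move=> qn0 c0p.
exists (c0 %/ q)%Z, (c0 %% q)%Z.
have e := divz_eq c0 q.
have h1 := modz_ge0 c0 qn0.
have h2 := ltz_mod c0 qn0.
set c := (c0 %/ q)%Z in e *; set d := (c0 %% q)%Z in e h1 h2 *.
split; [by rewrite mulrC | lia |].
rewrite -normrM.
have : 0 <= c * q.
  case: (ltrP (c * q) 0) => // neg.
  have : c != 0 by apply/eqP => c0'; move: neg; rewrite c0' mul0r ltxx.
  move=> cn0.
  have : `|q| <= `|c| * `|q|.
    by rewrite ler_pMl ?normr_gt0 // ; lia.
  lia.
move=> cq; rewrite mulrC in cq *; lia.
Qed.

Lemma divq (q c0 : int) : q != 0 ->
  exists c d, [/\ c0 = q * c + d, `|d| < `|q| & `|c| * `|q| <= `|c0|].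
Proof.
move=> qn0.
case: (lerP 0 c0) => h.
  have [c [d [e h1 h2]]] := divq_pos qn0 h.
  by exists c, d; split => //; lia.
have h' : 0 <= - c0 by lia.
have [c [d [e h1 h2]]] := divq_pos qn0 h'.
exists (- c), (- d); split; [lia | by rewrite normrN | by rewrite normrN; lia].
Qed.

Definition mu (h : int * int) : nat :=
  (2 * (absz h.2 + absz h.1) + (h.1 != 0))%N.

Lemma val_surj (p q : int) : 1 + `|p| < `|q| -> forall h : int * int,
  exists w, is_string q w /\ ev p q w = h.
Proof.
move=> hpq h.
have qn0 : q != 0 by apply/eqP => e; move: hpq; rewrite e normr0; lia.
have [n] := ubnP (mu h); elim: n h => [|n IH] [c1 c0] // hn.
case: (boolP ((c1 == 0) && (c0 == 0))) => [/andP [/eqP -> /eqP ->]|nz].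
  by exists [::].
have [c [d [e hd hc]]] := divq c0 qn0.
have hmu : (mu (c, c1 + p * c)%R < n)%N.
  move: hn; rewrite /mu /=.
  have hpc : `|p * c| = `|p| * `|c| by rewrite normrM.
  case: (boolP (c0 == 0)) => [/eqP c00|c0n0].
    have cz : c = 0.
      apply/eqP; rewrite -normr_eq0; apply/eqP.
      move: hc; rewrite c00 normr0 => hc.
      have : 0 <= `|c| * `|q| by [].
      have : 0 < `|q| by rewrite normr_gt0.
      nia.
    rewrite cz mulr0 addr0 eqxx /=.
    have c1n0 : c1 != 0 by move: nz; rewrite c00 eqxx andbT.
    rewrite c1n0 c00 /=; lia.
  have key : `|c1 + p * c| + `|c| < `|c0| + `|c1|.
    have t1 : `|c1 + p * c| <= `|c1| + `|p| * `|c| by rewrite -hpc ler_normD.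
    have t2 : (`|p| + 1) * `|c| < `|c0|.
      case: (boolP (c == 0)) => [/eqP ->|cn0]; first by rewrite normr0 mulr0 normr_gt0.
      have : 0 < `|c| by rewrite normr_gt0.
      nia.
    lia.
  case: (c != 0); case: (c1 != 0) => /=; lia.
have [w [sw vw]] := IH _ hmu.
exists (d :: w); split.
  by rewrite /= sw andbT /is_digit.
by rewrite /= vw /=; congr (_, _); [ring | rewrite e; ring].
Qed.


Lemma int_cases (a : int) : exists n : nat, a = n%:Z \/ a = - n%:Z.
Proof. exists (absz a); lia. Qed.

Lemma endo_lin (f : int * int -> int * int) : is_endo f -> forall a b,
  f (a, b) = (a * (f (1,0)).1 + b * (f (0,1)).1, a * (f (1,0)).2 + b * (f (0,1)).2).
Proof.
move=> hf.
have f0 : f (0, 0) = (0, 0).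
  have := hf (0,0) (0,0); rewrite /= addr0.
  case: (f (0,0)) => x y [e1 e2]; congr (_,_); lia.
have split_ab : forall a b, f (a, b) = ((f (a,0)).1 + (f (0,b)).1, (f (a,0)).2 + (f (0,b)).2).
  by move=> a b; rewrite -hf /= addr0 add0r.
have fa : forall n : nat, f (n%:Z, 0) = (n%:Z * (f (1,0)).1, n%:Z * (f (1,0)).2).
  elim=> [|n IH]; first by rewrite f0 !mul0r.
  have := hf (n%:Z, 0) (1, 0); rewrite /= addr0 IH.
  have -> : (n.+1)%:Z = n%:Z + 1 by lia.
  move=> ->; congr (_,_); rewrite /=; ring.
have fb : forall n : nat, f (0, n%:Z) = (n%:Z * (f (0,1)).1, n%:Z * (f (0,1)).2).
  elim=> [|n IH]; first by rewrite f0 !mul0r.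
  have := hf (0, n%:Z) (0, 1); rewrite /= addr0 IH.
  have -> : (n.+1)%:Z = n%:Z + 1 by lia.
  move=> ->; congr (_,_); rewrite /=; ring.
have fa' : forall a : int, f (a, 0) = (a * (f (1,0)).1, a * (f (1,0)).2).
  move=> a; case: (int_cases a) => n [->|->]; first exact: fa.
  have := hf (- n%:Z, 0) (n%:Z, 0); rewrite /= addr0 addNr f0 fa.
  case: (f (- n%:Z, 0)) => x y /= [e1 e2]; congr (_,_); lia.
have fb' : forall b : int, f (0, b) = (b * (f (0,1)).1, b * (f (0,1)).2).
  move=> b; case: (int_cases b) => n [->|->]; first exact: fb.
  have := hf (0, - n%:Z) (0, n%:Z); rewrite /= addr0 addNr f0 fb.
  case: (f (0, - n%:Z)) => x y /= [e1 e2]; congr (_,_); lia.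
by move=> a b; rewrite split_ab fa' fb'.
Qed.

Lemma ker_det (f : int * int -> int * int) (u v : int * int) : is_endo f ->
  (exists h, f h <> (0, 0)) -> f u = (0, 0) -> f v = (0, 0) ->
  u.1 * v.2 - u.2 * v.1 = 0.
Proof.
move=> hf [h hh]; case: u => u1 u2; case: v => v1 v2.
rewrite (endo_lin hf u1 u2) (endo_lin hf v1 v2) => -[e1 e2] [e3 e4] /=.
apply/eqP; apply/negPn/negP => dn0; apply: hh.
case: h => a b; rewrite (endo_lin hf a b).
set A1 := (f (1,0)).1 in e1 e3 *; set A2 := (f (1,0)).2 in e2 e4 *.
set B1 := (f (0,1)).1 in e1 e3 *; set B2 := (f (0,1)).2 in e2 e4 *.
have hA1 : (u1 * v2 - u2 * v1) * A1 = 0.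
  rewrite (_ : _ * A1 = v2 * (u1 * A1 + u2 * B1) - u2 * (v1 * A1 + v2 * B1)); last ring.
  by rewrite e1 e3; ring.
have hB1 : (u1 * v2 - u2 * v1) * B1 = 0.
  rewrite (_ : _ * B1 = u1 * (v1 * A1 + v2 * B1) - v1 * (u1 * A1 + u2 * B1)); last ring.
  by rewrite e1 e3; ring.
have hA2 : (u1 * v2 - u2 * v1) * A2 = 0.
  rewrite (_ : _ * A2 = v2 * (u1 * A2 + u2 * B2) - u2 * (v1 * A2 + v2 * B2)); last ring.
  by rewrite e2 e4; ring.
have hB2 : (u1 * v2 - u2 * v1) * B2 = 0.
  rewrite (_ : _ * B2 = u1 * (v1 * A2 + v2 * B2) - v1 * (u1 * A2 + u2 * B2)); last ring.
  by rewrite e2 e4; ring.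
have z : forall X, (u1 * v2 - u2 * v1) * X = 0 -> X = 0.
  by move=> X /eqP; rewrite mulf_eq0 (negbTE dn0) => /eqP.
by rewrite (z _ hA1) (z _ hB1) (z _ hA2) (z _ hB2) !mulr0 !addr0.
Qed.


Definition Mv (p q : int) (v : int * int) : int * int := (v.2 - p * v.1, q * v.1).

Lemma ev_cat (p q : int) (a b : seq int) : ev p q (a ++ b) =
  ((ev p q a).1 + (iter (size a) (Mv p q) (ev p q b)).1,
   (ev p q a).2 + (iter (size a) (Mv p q) (ev p q b)).2).
Proof.
elim: a => [|d a IH] /=; first by rewrite !add0r; case: (ev p q b).
rewrite IH /=; congr (_, _); ring.
Qed.

Lemma iter_sub (p q : int) (n : nat) (a b : int * int) :
  iter n (Mv p q) (a.1 - b.1, a.2 - b.2) =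
  ((iter n (Mv p q) a).1 - (iter n (Mv p q) b).1, (iter n (Mv p q) a).2 - (iter n (Mv p q) b).2).
Proof. elim: n => [|n IH] //=; rewrite IH /Mv /=; congr (_, _); ring. Qed.

Definition sr (p q : int) (m : nat) := iter m (Mv p q) (0, 1).

Lemma CH (p q : int) (m : nat) (v : int * int) :
  iter m (Mv p q) v = ((sr p q m).1 * (Mv p q v).1 + (sr p q m).2 * v.1,
                       (sr p q m).1 * (Mv p q v).2 + (sr p q m).2 * v.2).
Proof.
elim: m => [|m IH] /=; first by rewrite /sr /= !mul0r !mul1r !add0r; case: v.
rewrite IH /sr /Mv /=; congr (_, _); ring.
Qed.

Lemma sr_coprime (p q : int) (m : nat) : gcdz p q = 1%N ->
  coprimez q (sr p q m.+1).1.
Proof.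
move=> hg; have cqp : coprimez q p by rewrite /coprimez gcdzC hg.
elim: m => [|m IH]; first by rewrite /sr /= mulr0 subr0 /coprimez gcdz1.
rewrite /sr iterS /=; move: IH; rewrite /sr /=.
set X := iter m (Mv p q) (0, 1) => IH.
rewrite (_ : q * _ - _ = X.1 * q + - (p * (X.2 - p * X.1))); last ring.
by rewrite /coprimez gcdzMDl gcdzN Gauss_gcdzr.
Qed.

Lemma no_int_root (p q r : int) : irreducible_Zx (tpoly p q) -> r * r + p * r - q <> 0.
Proof.
move=> [_ hirr] e.
have : tpoly p q = ('X - r%:P) * ('X - (- (r + p))%:P).
  have -> : q = r * r + p * r by lia.
  rewrite /tpoly !rmorphN !rmorphD !rmorphM /=; ring.
move=> /hirr [] ; rewrite poly_unitE size_XsubC //.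
Qed.

Lemma no_eigen (p q a b : int) : irreducible_Zx (tpoly p q) ->
  a * (q * a) - b * (b - p * a) = 0 -> a = 0 /\ b = 0.
Proof.
move=> hirr e.
case: (eqVneq a 0) => [a0|an0].
  subst a; split => //; move: e; rewrite !mul0r mulr0 subr0 sub0r => /eqP.
  by rewrite oppr_eq0 mulf_eq0 orbb => /eqP.
exfalso.
set g : int := gcdz a b.
have gn0 : g != 0.
  have : (gcdz a b != 0)%N by rewrite gcdz_eq0 negb_and an0.
  rewrite /g; lia.
have ha := divzK (dvdz_gcdl a b); have hb := divzK (dvdz_gcdr a b).
rewrite -/g in ha hb.
set a' := (a %/ g)%Z in ha; set b' := (b %/ g)%Z in hb.
have [u [v huv]] := Bezoutz a b; rewrite -/g in huv.
clearbody a' b' g; subst a b.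
have h1 : u * a' + v * b' = 1.
  by apply: (mulIf gn0); rewrite mul1r -[RHS]huv; ring.
have h2 : a' * (q * a') - b' * (b' - p * a') = 0.
  have : (g * g) * (a' * (q * a') - b' * (b' - p * a')) = 0 by rewrite -e; ring.
  by move/eqP; rewrite mulf_eq0 mulf_eq0 (negbTE gn0) /= => /eqP.
set K := u * u * a' + 2 * u * v * b' + v * v * (q * a' + p * b').
have hK : a' * K = 1.
  have -> : a' * K = (u * a' + v * b') ^+ 2 + v * v * (a' * (q * a') - b' * (b' - p * a')).
    by rewrite /K; ring.
  by rewrite h1 h2; ring.
have ha2 : a' * a' = 1.
  have hn : `|a'| * `|K| = 1 by rewrite -normrM hK.
  have n1 : `|a'| != 0 by apply/eqP => z; move: hn; rewrite z mul0r.
  have n2 : `|K| != 0 by apply/eqP => z; move: hn; rewrite z mulr0.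
  have hge : 1 <= `|K| by move: n2; lia.
  have : `|a'| * 1 <= `|a'| * `|K| by rewrite ler_wpM2l.
  rewrite hn mulr1 => hle.
  have : `|a'| = 1 by lia.
  move=> h; rewrite -[a' * a']ger0_norm; first by rewrite normrM h mulr1.
  by rewrite -expr2 sqr_ge0.
apply: (@no_int_root p q (- b' * a') hirr).
rewrite (_ : _ - q = (b' * b') * (a' * a') - p * a' * b' - q); last ring.
have hq : q * (a' * a') = q by rewrite ha2 mulr1.
rewrite ha2 mulr1; nia.
Qed.


Lemma ev_bound (p q : int) (N : nat) : exists B : int, 0 <= B /\
  forall w, is_string q w -> (size w <= N)%N ->
    `|(ev p q w).1| <= B /\ `|(ev p q w).2| <= B.
Proof.
elim: N => [|N [B [B0 IH]]].
  by exists 0; split => // -[|d w] //= _ _; rewrite normr0.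
exists ((1 + `|p| + `|q|) * (B + 1)); split; first by rewrite mulr_ge0 //; lia.
move=> [|d w] /=; first by rewrite normr0 mulr_ge0 //; lia.
move=> /andP [hd hw] hs; have [h1 h2] := IH w hw hs.
set x1 := (ev p q w).1 in h1 *; set x2 := (ev p q w).2 in h2 *.
have t1 : `|x2 - p * x1| <= `|x2| + `|p| * `|x1| by rewrite -normrM ler_normB.
have t2 : `|d + q * x1| <= `|d| + `|q| * `|x1| by rewrite -normrM ler_normD.
have t3 : `|p| * `|x1| <= `|p| * B by rewrite ler_wpM2l.
have t4 : `|q| * `|x1| <= `|q| * B by rewrite ler_wpM2l.
move: hd; rewrite /is_digit => hd.
have : 0 <= `|p| * B by rewrite mulr_ge0.
have : 0 <= `|q| * B by rewrite mulr_ge0.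
have e : (1 + `|p| + `|q|) * (B + 1) = B + 1 + `|p| * B + `|p| + `|q| * B + `|q| by ring.
rewrite e; split; lia.
Qed.

Lemma pump (S : finType) (s0 : S) (delta : S -> int -> S) (u : seq int) :
  (#|S| < size u)%N -> exists x y z,
    [/\ u = x ++ y ++ z, y != [::] & foldl delta s0 (x ++ y) = foldl delta s0 x].
Proof.
move=> hs.
pose g := fun i : 'I_(#|S|.+1) => foldl delta s0 (take i u).
have key : forall i j : 'I_(#|S|.+1), (i < j)%N -> g i = g j -> exists x y z,
    [/\ u = x ++ y ++ z, y != [::] & foldl delta s0 (x ++ y) = foldl delta s0 x].
  move=> i j lij e.
  exists (take i u), (drop i (take j u)), (drop j u).
  have hj : (j <= size u)%N by have := ltn_ord j; lia.
  have tt : take i u ++ drop i (take j u) = take j u.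
    rewrite -[X in X ++ _](@take_takel _ i j u); [exact: cat_take_drop | lia].
  split.
  - by rewrite catA tt cat_take_drop.
  - rewrite -size_eq0 size_drop size_take; case: (ltnP j (size u)) => h1; rewrite subn_eq0 -ltnNge //; exact: leq_trans lij hj.
  - by rewrite tt; exact: (esym e).
have : ~~ injectiveb g.
  apply/negP => /injectiveP inj; have := @leq_card _ _ g inj; rewrite card_ord; lia.
move=> /injectivePn [i [j ij gij]].
case: (ltngtP i j) => h.
- exact: key h gij.
- exact: key h (esym gij).
- by move: ij; rewrite (val_inj h) eqxx.
Qed.

Lemma conv_nil (u : seq int) : conv u [::] = map (fun a => (Some a, None)) u.
Proof.
apply: (@eq_from_nth _ (None, None)); first by rewrite size_map /conv size_mkseq maxn0.
move=> i; rewrite /conv size_mkseq maxn0 => hi.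
by rewrite nth_mkseq ?maxn0 // (nth_map 0) // /pad_nth hi.
Qed.

Lemma conv_inj_nil (a b s : seq int) : conv a b = conv s [::] -> a = s /\ b = [::].
Proof.
case: b => [|y b] e.
  split => //; move: e; rewrite !conv_nil; apply: inj_map; by move=> ? ? [].
exfalso.
have hs : size (conv s [::]) = maxn (size a) (size (y :: b)) by rewrite -e /conv size_mkseq.
have : (0 < size s)%N by move: hs; rewrite /conv size_mkseq maxn0 /=; lia.
move=> hs0.
have := congr1 (fun w => nth (None, None) w 0) e.
rewrite conv_nil (nth_map 0); last by rewrite size_iota /=; lia.
rewrite nth_iota; last by rewrite /=; lia.
by rewrite (nth_map 0) // /pad_nth /= => -[].
Qed.


Lemma equiv_ev (p q : int) (u w : seq int) : str_equiv p q u w -> ev p q u = ev p q w.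
Proof.
move=> [r Hr]; have [r' Hr'] := sim_val p q w.
symmetry; apply/(psi_is_val p q u (ev p q w)).
exists (r + r'); rewrite mulrDl -Hr -Hr' /str_poly; ring.
Qed.

Lemma phi_rel_nil (p q : int) f (u : seq int) :
  phi_rel p q f u [::] <-> Dom p q u /\ f (ev p q u) = (0, 0).
Proof.
split.
  move=> [Du [_ [h [hu hv]]]]; split => //.
  move/psi_is_val: hu => eh; subst h; by move/psi_is_val: hv.
move=> [Du fu]; split => //; split; first exact: Dom_nil.
exists (ev p q u); split; first exact/psi_is_val.
by apply/psi_is_val; rewrite fu.
Qed.

Lemma f_sub f (u v : int * int) : is_endo f -> f u = (0, 0) -> f v = (0, 0) ->
  f (u.1 - v.1, u.2 - v.2) = (0, 0).
Proof.
move=> hf; case: u => u1 u2; case: v => v1 v2 /=.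
rewrite (endo_lin hf u1 u2) (endo_lin hf v1 v2) (endo_lin hf (u1 - v1) (u2 - v2)) => -[e1 e2] [e3 e4].
congr (_, _).
  by rewrite (_ : _ + _ = (u1 * (f (1, 0)).1 + u2 * (f (0, 1)).1) - (v1 * (f (1, 0)).1 + v2 * (f (0, 1)).1)); [rewrite e1 e3 subr0 | ring].
by rewrite (_ : _ + _ = (u1 * (f (1, 0)).2 + u2 * (f (0, 1)).2) - (v1 * (f (1, 0)).2 + v2 * (f (0, 1)).2)); [rewrite e2 e4 subr0 | ring].
Qed.

Lemma foldl_map' (A B S : Type) (delta : S -> B -> S) (g : A -> B) (s : S) (u : seq A) :
  foldl delta s (map g u) = foldl (fun s a => delta s (g a)) s u.
Proof. by elim: u s => [|a u IH] s //=. Qed.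

Unset Implicit Arguments. Set Strict Implicit.

Theorem mainTheorem8 (p q : int)
  (hpq : 1 + `|p| < `|q|) (hgcd : gcdz p q = 1%N)
  (hirr : irreducible_Zx (tpoly p q))
  (f : int * int -> int * int) (hf : is_endo f)
  (hnz : exists h, f h <> (0, 0))
  (hker : exists h, h <> (0, 0) /\ f h = (0, 0)) :
  ~ FA_recognizable_rel (phi_rel p q f).
Proof.
move=> [S [s0 [delta [F HF]]]].
have hq : 1 < `|q| by lia.
pose d' := fun s a => delta s (Some a, None).
have acc : forall u, F (foldl d' s0 u) -> phi_rel p q f u [::].
  move=> u hu.
  have : dfa_accepts s0 delta F (conv u [::]) by rewrite /dfa_accepts conv_nil foldl_map'.
  move=> /HF [a [b [e hr]]]; have [ea eb] := conv_inj_nil (esym e).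
  by rewrite -ea -eb.
have acc' : forall u, phi_rel p q f u [::] -> F (foldl d' s0 u).
  move=> u hr.
  have : dfa_accepts s0 delta F (conv u [::]) by apply/HF; exists u, [::].
  by rewrite /dfa_accepts conv_nil foldl_map'.
have [[k1 k2] [k0n0 fk0]] := hker.
have [B [B0 HB]] := ev_bound p q #|S|.
pose n : int := B + 1.
have fh : f (n * k1, n * k2) = (0, 0).
  move: fk0; rewrite (endo_lin hf k1 k2) (endo_lin hf (n * k1) (n * k2)) => -[e1 e2].
  congr (_, _).
    by rewrite (_ : _ + _ = n * (k1 * (f (1, 0)).1 + k2 * (f (0, 1)).1)); [rewrite e1 mulr0 | ring].
  by rewrite (_ : _ + _ = n * (k1 * (f (1, 0)).2 + k2 * (f (0, 1)).2)); [rewrite e2 mulr0 | ring].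
have [w [sw ew]] := val_surj hpq (n * k1, n * k2).
have [u [Du eu]] := Dom_exists p hq sw.
have evu : ev p q u = (n * k1, n * k2) by rewrite (equiv_ev eu) ew.
have su : (#|S| < size u)%N.
  rewrite ltnNge; apply/negP => hle; have [b1 b2] := HB u Du.1 hle.
  rewrite evu /= !normrM in b1 b2.
  have hn : `|n| = B + 1 by rewrite /n; lia.
  rewrite hn in b1 b2.
  have : k1 != 0 \/ k2 != 0.
    case: (eqVneq k1 0) => [e1|]; last by left.
    case: (eqVneq k2 0) => [e2|]; last by right.
    by exfalso; apply: k0n0; rewrite e1 e2.
  case=> kn.
    have : 1 <= `|k1| by move: kn; lia.
    nia.
  have : 1 <= `|k2| by move: kn; lia.
  nia.
have hu : phi_rel p q f u [::] by apply/phi_rel_nil; rewrite evu.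
have [x [y [z [ue yn ey]]]] := pump s0 d' su.
have st : forall k, foldl d' s0 (x ++ (y ++ k)) = foldl d' s0 (x ++ k).
  by move=> k; rewrite catA foldl_cat ey -foldl_cat.
have h0 : phi_rel p q f (x ++ z) [::] by apply: acc; rewrite -st -ue; apply: acc'.
have h2 : phi_rel p q f (x ++ (y ++ (y ++ z))) [::].
  by apply: acc; rewrite st -ue; apply: acc'.
move/phi_rel_nil: h0 => [D0 f0].
move/phi_rel_nil: h2 => [_ f2].
move/phi_rel_nil: hu => [D1' f1]; rewrite ue in D1' f1.
set P0 := ev p q (x ++ z) in f0.
set P1 := ev p q (x ++ (y ++ z)) in f1.
set P2 := ev p q (x ++ (y ++ (y ++ z))) in f2.
set E := ((ev p q (y ++ z)).1 - (ev p q z).1, (ev p q (y ++ z)).2 - (ev p q z).2).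
have eD1 : (P1.1 - P0.1, P1.2 - P0.2) = iter (size x) (Mv p q) E.
  rewrite /P1 /P0 /E (ev_cat p q x (y ++ z)) (ev_cat p q x z) iter_sub /=.
  congr (_, _); ring.
have eY : ((ev p q (y ++ (y ++ z))).1 - (ev p q (y ++ z)).1,
            (ev p q (y ++ (y ++ z))).2 - (ev p q (y ++ z)).2) = iter (size y) (Mv p q) E.
  rewrite /E iter_sub (ev_cat p q y (y ++ z)) (ev_cat p q y z) /=; congr (_, _); ring.
have eD2 : (P2.1 - P1.1, P2.2 - P1.2) = iter (size y) (Mv p q) (iter (size x) (Mv p q) E).
  rewrite /P2 /P1 (ev_cat p q x (y ++ (y ++ z))) (ev_cat p q x (y ++ z)).
  transitivity (iter (size x) (Mv p q) ((ev p q (y ++ (y ++ z))).1 - (ev p q (y ++ z)).1,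
            (ev p q (y ++ (y ++ z))).2 - (ev p q (y ++ z)).2)).
    rewrite iter_sub /=; congr (_, _); ring.
  by rewrite eY -!iterD addnC.
set D1 := iter (size x) (Mv p q) E in eD1 eD2.
have fD1 : f D1 = (0, 0) by rewrite -eD1; apply: f_sub.
have fD2 : f (iter (size y) (Mv p q) D1) = (0, 0) by rewrite -eD2; apply: f_sub.
have det0 := ker_det hf hnz fD1 fD2.
rewrite CH /= in det0.
have hm : size y = (size y).-1.+1 by case: (y) yn.
have sn0 : (sr p q (size y)).1 != 0.
  rewrite hm; apply/eqP => e0; have := sr_coprime (size y).-1 hgcd.
  by rewrite e0 /coprimez gcdz0; lia.
have det1 : D1.1 * (q * D1.1) - D1.2 * (D1.2 - p * D1.1) = 0.
  have : (sr p q (size y)).1 * (D1.1 * (q * D1.1) - D1.2 * (D1.2 - p * D1.1)) = 0.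
    by rewrite -det0 /Mv /=; ring.
  by move/eqP; rewrite mulf_eq0 (negbTE sn0) /= => /eqP.
have [z1 z2] := no_eigen hirr det1.
have eP : P1 = P0.
  have e1 : P1.1 - P0.1 = 0 by rewrite -z1 -eD1.
  have e2 : P1.2 - P0.2 = 0 by rewrite -z2 -eD1.
  rewrite [P1]surjective_pairing [P0]surjective_pairing; congr (_, _); lia.
have := Dom_uniq D1' D0 (equiv_val p q _ _ eP).
move/(congr1 size); rewrite !size_cat; move: yn; rewrite -size_eq0; lia.
Qed.
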